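(* Let $\mathcal{N}$ be a nested set on a connected graph $\Gamma$ such that the full vertex set of $\Gamma$ is not an element of $\mathcal{N}$. Then there is a vertex $x$ of $\Gamma$ which is not contained in any element of $\mathcal{N}$.
   Context: A nested set on a finite simple graph $\Gamma$ is a collection $\mathcal{N}$ of subsets of the vertex set such that (N1) each $J\in\mathcal{N}$ induces a connected subgraph of $\Gamma$; (N2) for any $I,J\in\mathcal{N}$, either $I\subseteq J$, $J\subseteq I$, or $I\cap J=\emptyset$; (N3) for any $k\geq 2$ pairwise disjoint $J_1,\dots,J_k\in\mathcal{N}$, the induced subgraph on $J_1\cup\cdots\cup J_k$ is not connected. The graph $\Gamma$ itself is identified with its vertex set. *)

(* Defs.v *)
(* A finite simple graph is a finType T of vertices with a
   symmetric irreflexive adjacency relation e. *)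
From mathcomp Require Import all_boot.
Set Implicit Arguments. Unset Strict Implicit. Unset Printing Implicit Defensive.

Definition induced_rel (T : finType) (e : rel T) (S : {set T}) : rel T :=
  [rel a b | [&& e a b, a \in S & b \in S]].

Definition induces_connected (T : finType) (e : rel T) (S : {set T}) : Prop :=
  S != set0 /\ forall x y, x \in S -> y \in S -> connect (induced_rel e S) x y.

Definition graph_connected (T : finType) (e : rel T) : Prop :=
  induces_connected e [set: T].

Definition nested_set (T : finType) (e : rel T) (N : {set {set T}}) : Prop :=
  (forall J, J \in N -> induces_connected e J) /\
  (forall I J, I \in N -> J \in N ->
     [\/ I \subset J, J \subset I | [disjoint I & J]]) /\
  (forall F : {set {set T}}, F \subset N -> 2 <= #|F| ->
     (forall I J, I \in F -> J \in F -> I != J -> [disjoint I & J]) ->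
     ~ induces_connected e (\bigcup_(J in F) J)).

(* Main.v *)
Require Import Defs.
From mathcomp Require Import all_boot.

Theorem lemma5p5 (T : finType) (e : rel T)
  (e_sym : symmetric e) (e_irr : irreflexive e)
  (N : {set {set T}}) :
  graph_connected e -> nested_set e N -> [set: T] \notin N ->
  exists x : T, forall J, J \in N -> x \notin J.
Proof.
move=> Hc [N1 [N2 N3]] HT.
case: (pickP [pred x | [forall J in N, x \notin J]]) => [x /forall_inP Hx|Hno].
  by exists x.
set F := [set J in N | [forall K in N, (J \subset K) ==> (K == J)]].
have maxex : forall J, J \in N -> exists2 K, K \in F & J \subset K.
  move=> J JN.
  case: (@arg_maxnP _ J (fun K => (K \in N) && (J \subset K)) (fun K => #|K|)).
    by rewrite JN subxx.
  move=> K /andP[KN JK] Kmax; exists K => //.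
  rewrite inE KN; apply/forall_inP => K' K'N; apply/implyP => KK'.
  have := Kmax K'; rewrite K'N (subset_trans JK KK') => /(_ isT) le.
  by rewrite eq_sym eqEcard KK'.
have Fsub : F \subset N by apply/subsetP => K; rewrite inE => /andP[].
have Fdisj : forall I J, I \in F -> J \in F -> I != J -> [disjoint I & J].
  move=> I J; rewrite !inE => /andP[IN /forall_inP Imax] /andP[JN /forall_inP Jmax] IJ.
  case: (N2 I J IN JN) => // [IJs|JIs].
    by move: (Imax J JN); rewrite IJs /= => /eqP E; rewrite E eqxx in IJ.
  by move: (Jmax I IN); rewrite JIs /= => /eqP E; rewrite E eqxx in IJ.
have Ucov : \bigcup_(J in F) J = [set: T].
  apply/eqP; rewrite eqEsubset subsetT /=; apply/subsetP => x _.
  move: (Hno x) => /= /negbT; rewrite negb_forall_in => /existsP[J /andP[JN]].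
  rewrite negbK => xJ.
  have [K KF JK] := maxex J JN.
  by apply/bigcupP; exists K => //; apply: (subsetP JK).
have [Hne _] := Hc.
case: (ltnP 1 #|F|) => [F2|F1].
  by exfalso; apply: (N3 F Fsub F2 Fdisj); rewrite Ucov.
move: F1; rewrite leq_eqVlt ltnS leqn0 => /orP[/cards1P[M FM]|/eqP/cards0_eq F0].
  move: Ucov; rewrite FM big_set1 => EM.
  by move: HT; rewrite -EM; have := Fsub; rewrite FM sub1set => ->.
by move: Hne; rewrite -Ucov F0 big_set0 eqxx.
Qed.
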